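(* Let $n\ge5$ and let $f(x)=x^n+a_2x^{n-2}+a_3x^{n-3}+\dots+a_{n-1}x+a_n$ be a polynomial (with zero coefficient of $x^{n-1}$) all of whose roots are real. Then $$\operatorname{spn}(f)\ge\Big(\frac{432}{n^3}\big(4(2-n)a_2^3-9na_3^2+8na_2a_4\big)\Big)^{1/6}.$$
   Context: If $x_1,\dots,x_n$ are the roots of $f$, the span of $f$ is $\operatorname{spn}(f)=\max_{i,j}|x_i-x_j|$. *)

(* Defs.v *)
From HB Require Import structures.
From mathcomp Require Import all_boot all_order all_algebra.
From mathcomp Require Import reals exp.
Set Implicit Arguments. Unset Strict Implicit. Unset Printing Implicit Defensive.
Import Order.TTheory GRing.Theory Num.Theory.
Local Open Scope ring_scope.

(* Span of a polynomial given (with multiplicity) by its list of roots rs: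
   spn = max_{i,j} |x_i - x_j|  (0 for the empty list). *)
Definition spn_roots (R : realDomainType) (rs : seq R) : R :=
  \big[Num.max/0]_(x <- rs) \big[Num.max/0]_(y <- rs) `|x - y|.

(* Main.v *)
From HB Require Import structures.
From mathcomp Require Import all_boot all_order all_algebra.
From mathcomp Require Import reals exp.
From mathcomp Require Import ring lra.
Require Import Defs.
Import Order.TTheory GRing.Theory Num.Theory.

Local Open Scope ring_scope.

Section S.
Variable R : realType.
Fixpoint esym (s : seq R) (k : nat) : R :=
  match s, k with
  | _, 0%N => 1
  | [::], _.+1 => 0
  | x :: s', k'.+1 => esym s' k + x * esym s' k'
  end.

Lemma esym_gt s k : (size s < k)%N -> esym s k = 0.
Proof.
elim: s k => [|x s IH] [|k] //= H.
by rewrite !IH ?mulr0 ?addr0 // ltnW.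
Qed.

Lemma esym0 s : esym s 0 = 1. Proof. by case: s. Qed.

Lemma coef_prod s k : (k <= size s)%N ->
  (\prod_(x <- s) ('X - x%:P))`_(size s - k) = (-1) ^+ k * esym s k.
Proof.
elim: s k => [|x s IH] k.
  by rewrite leqn0 => /eqP ->; rewrite big_nil coefC /= expr0 mul1r.
move=> Hk; rewrite big_cons mulrBl coefB coefXM coefCM /=.
have Hsz := size_prod_XsubC s id.
case: k Hk => [|k] Hk.
  rewrite subn0 /=; have := IH 0%N (leq0n _); rewrite subn0 => ->.
  rewrite [X in x * X](nth_default 0) ?Hsz // mulr0 subr0 /=.
  by rewrite esym0.
rewrite subSS; move: Hk; rewrite /= ltnS => Hk.
case: (ltnP k (size s)) => Hks.
  have -> : (size s - k == 0)%N = false by rewrite subn_eq0 leqNgt Hks.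
  have -> : (size s - k).-1 = (size s - k.+1)%N by rewrite subnS.
  rewrite (IH k.+1 Hks) (IH k Hk) exprS; ring.
have Hke : k = size s by apply/eqP; rewrite eqn_leq Hk Hks.
subst k; rewrite subnn /= esym_gt // add0r.
have := IH (size s) (leqnn _); rewrite subnn => ->.
rewrite exprS; ring.
Qed.

Definition ps (k : nat) (s : seq R) := \sum_(x <- s) x ^+ k.

Lemma ps_cons k x s : ps k (x :: s) = x ^+ k + ps k s.
Proof. by rewrite /ps big_cons. Qed.

Lemma esym1 s : esym s 1 = ps 1 s.
Proof. elim: s => [|x s IH]; first by rewrite /ps big_nil.
rewrite [LHS]/= IH esym0 ps_cons; ring. Qed.

Lemma esym2 s : esym s 2 = (ps 1 s ^+ 2 - ps 2 s) / 2.
Proof. elim: s => [|x s IH]; first by rewrite /ps !big_nil /=; field.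
rewrite [LHS]/= IH esym1 !ps_cons. by field. Qed.

Lemma esym3 s : esym s 3 = (ps 1 s ^+ 3 - 3 * ps 1 s * ps 2 s + 2 * ps 3 s) / 6.
Proof. elim: s => [|x s IH]; first by rewrite /ps !big_nil /=; field.
rewrite [LHS]/= IH esym2 !ps_cons. by field. Qed.

Lemma esym4 s : esym s 4 = (ps 1 s ^+ 4 - 6 * ps 1 s ^+ 2 * ps 2 s + 3 * ps 2 s ^+ 2
   + 8 * ps 1 s * ps 3 s - 6 * ps 4 s) / 24.
Proof. elim: s => [|x s IH]; first by rewrite /ps !big_nil /=; field.
rewrite [LHS]/= IH esym3 !ps_cons. by field. Qed.

Lemma cubic_bound (p2 S K : R) : 0 <= p2 -> p2 <= S -> 0 <= K ->
  p2 * (K * S - S ^+ 2) <= 4 * K ^+ 3 / 27.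
Proof.
move=> h0 h1 hK.
have hS : 0 <= S by apply: le_trans h1.
have hc : 0 <= 4 * K ^+ 3 / 27 by apply: divr_ge0; [apply: mulr_ge0 => //; apply: exprn_ge0|].
case: (leP 0 (K - S)) => hKS.
  have e1 : p2 * (K * S - S ^+ 2) <= S * (K * S - S ^+ 2).
    have -> : K * S - S ^+ 2 = S * (K - S) by ring.
    by apply: ler_wpM2r => //; apply: mulr_ge0.
  apply: le_trans e1 _.
  have e2 : 0 <= (3 * S - 2 * K) ^+ 2 * (3 * S + K).
    by apply: mulr_ge0; [apply: sqr_ge0| lra].
  have -> : 4 * K ^+ 3 / 27 = S * (K * S - S ^+ 2) + (3 * S - 2 * K) ^+ 2 * (3 * S + K) / 27.
    by field.
  rewrite lerDl; apply: divr_ge0 => //.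
have -> : K * S - S ^+ 2 = S * (K - S) by ring.
apply: le_trans hc.
rewrite mulrA; apply: mulr_ge0_le0; [by apply: mulr_ge0| lra].
Qed.

Lemma core (n p2 p3 p4 c d : R) : 0 < n -> 0 <= p2 -> 0 <= d ->
  p4 - 4 * c * p3 + 6 * c ^+ 2 * p2 + n * c ^+ 4 <= d ^+ 2 * (p2 + n * c ^+ 2) ->
  n * p2 * p4 - n * p3 ^+ 2 - p2 ^+ 3 <= 4 * (n * d ^+ 2) ^+ 3 / 27.
Proof.
move=> hn hp hd hT.
set S := p2 + n * c ^+ 2.
set T := p4 - 4 * c * p3 + 6 * c ^+ 2 * p2 + n * c ^+ 4 in hT.
have h1 : n * p2 * p4 - n * p3 ^+ 2 - p2 ^+ 3 <= p2 * (n * T - S ^+ 2).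
  rewrite -subr_ge0.
  have -> : p2 * (n * T - S ^+ 2) - (n * p2 * p4 - n * p3 ^+ 2 - p2 ^+ 3)
     = n * (p3 - 2 * c * p2) ^+ 2 by rewrite /S /T; ring.
  by apply: mulr_ge0; [apply: ltW|apply: sqr_ge0].
apply: le_trans h1 _.
have h2 : p2 * (n * T - S ^+ 2) <= p2 * ((n * d ^+ 2) * S - S ^+ 2).
  apply: ler_wpM2l => //; rewrite lerD2r -mulrA; apply: ler_wpM2l; [exact: ltW|done].
apply: le_trans h2 _.
apply: cubic_bound => //.
  by rewrite /S lerDl; apply: mulr_ge0; [apply: ltW|apply: sqr_ge0].
by apply: mulr_ge0; [apply: ltW|apply: sqr_ge0].
Qed.
Lemma ps0 s : ps 0 s = (size s)%:R.
Proof. elim: s => [|x s IH]; first by rewrite /ps big_nil.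
by rewrite ps_cons IH /= expr0 -addn1 natrD addrC. Qed.

Lemma sum2 c s : \sum_(x <- s) (x - c) ^+ 2 = ps 2 s - 2 * c * ps 1 s + c ^+ 2 * ps 0 s.
Proof. elim: s => [|x s IH]; first by rewrite /ps !big_nil; ring.
rewrite big_cons IH !ps_cons; ring. Qed.

Lemma sum4 c s : \sum_(x <- s) (x - c) ^+ 4 = ps 4 s - 4 * c * ps 3 s + 6 * c ^+ 2 * ps 2 s
   - 4 * c ^+ 3 * ps 1 s + c ^+ 4 * ps 0 s.
Proof. elim: s => [|x s IH]; first by rewrite /ps !big_nil; ring.
rewrite big_cons IH !ps_cons; ring. Qed.

Lemma ps2_ge0 s : 0 <= ps 2 s.
Proof. by apply: sumr_ge0 => x _; apply: sqr_ge0. Qed.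

Lemma sum42 (c d : R) (s : seq R) : (forall x, x \in s -> `|x - c| <= d) ->
  \sum_(x <- s) (x - c) ^+ 4 <= d ^+ 2 * \sum_(x <- s) (x - c) ^+ 2.
Proof.
elim: s => [|x s IH] H; first by rewrite !big_nil mulr0.
rewrite !big_cons mulrDr; apply: lerD.
  have := H x (mem_head _ _); rewrite ler_norml => /andP[h1 h2].
  have h3 : (x - c) ^+ 2 <= d ^+ 2 by nra.
  have -> : (x - c) ^+ 4 = (x - c) ^+ 2 * (x - c) ^+ 2 by rewrite -exprD.
  by apply: ler_wpM2r => //; apply: sqr_ge0.
by apply: IH => y hy; apply: H; rewrite inE hy orbT.
Qed.

Lemma ex_minmax (s : seq R) : s != [::] ->
  exists lo hi, [/\ lo \in s, hi \in s & forall x, x \in s -> lo <= x <= hi].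
Proof.
elim: s => [//|x [|y s] IH] _.
  by exists x, x; split; rewrite ?mem_head // => z; rewrite inE => /eqP ->; rewrite lexx.
have [lo [hi [h1 h2 h3]]] := IH isT.
exists (Num.min x lo), (Num.max x hi); split.
- by rewrite /Num.min; case: ifP => _; rewrite inE ?eqxx // h1 orbT.
- by rewrite /Num.max; case: ifP => _; rewrite inE ?eqxx // h2 orbT.
move=> z; rewrite inE => /predU1P[->|hz].
  by rewrite ge_min le_max lexx.
have /andP[a b] := h3 z hz.
by rewrite ge_min le_max a b !orbT.
Qed.

Lemma spn_ge (s : seq R) x y : x \in s -> y \in s -> `|x - y| <= spn_roots s.
Proof.
move=> hx hy; rewrite /spn_roots.
apply: bigmax_sup_seq hx _ _ => //.
by apply: le_bigmax_seq hy _.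
Qed.

Lemma spn_ge0 (s : seq R) : 0 <= spn_roots s.
Proof. exact: bigmax_ge_id. Qed.
End S.
Arguments esym {R}.
Arguments esym_gt {R}.
Arguments esym0 {R}.
Arguments coef_prod {R}.
Arguments ps {R}.
Arguments ps_cons {R}.
Arguments esym1 {R}.
Arguments esym2 {R}.
Arguments esym3 {R}.
Arguments esym4 {R}.
Arguments cubic_bound {R}.
Arguments core {R}.
Arguments ps0 {R}.
Arguments sum2 {R}.
Arguments sum4 {R}.
Arguments ps2_ge0 {R}.
Arguments sum42 {R}.
Arguments ex_minmax {R}.
Arguments spn_ge {R}.
Arguments spn_ge0 {R}.

Theorem theorem4p2 (R : realType) (n : nat) (f : {poly R}) (rs : seq R) :
  (5 <= n)%N ->
  size rs = n ->
  f = \prod_(x <- rs) ('X - x%:P) ->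
  f`_(n.-1) = 0 ->
  let a2 := f`_(n - 2) in
  let a3 := f`_(n - 3) in
  let a4 := f`_(n - 4) in
  let E := (432 / (n%:R ^+ 3)) *
           (4 * (2 - n%:R) * a2 ^+ 3 - 9 * n%:R * a3 ^+ 2
            + 8 * n%:R * a2 * a4) in
  0 <= E ->
  powR E (6%:R^-1) <= spn_roots rs.
Proof.
move=> h5 hsz hf hc1 a2 a3 a4 E hE.
set D := spn_roots rs.
set nR : R := n%:R.
have hnR : 0 < nR by rewrite /nR ltr0n; apply: leq_trans h5.
have hp0 : ps 0 rs = nR by rewrite ps0 hsz.
have hp1 : ps 1 rs = 0.
  have := coef_prod rs 1; rewrite hsz subn1 -hf hc1 esym1 => h.
  have := h (leq_trans (isT : (1 <= 5)%N) h5); rewrite expr1 => h'.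
  by move: h'; rewrite mulN1r => /eqP; rewrite eq_sym oppr_eq0 => /eqP.
have ha2 : a2 = - ps 2 rs / 2.
  rewrite /a2 hf -hsz coef_prod; last by rewrite hsz; apply: leq_trans h5.
  by rewrite esym2 hp1; ring.
have ha3 : a3 = - ps 3 rs / 3.
  rewrite /a3 hf -hsz coef_prod; last by rewrite hsz; apply: leq_trans h5.
  by rewrite esym3 hp1; field.
have ha4 : a4 = (3 * ps 2 rs ^+ 2 - 6 * ps 4 rs) / 24.
  rewrite /a4 hf -hsz coef_prod; last by rewrite hsz; apply: leq_trans h5.
  by rewrite esym4 hp1; field.
have hne : rs != [::] by apply/eqP => h; move: hsz h5; rewrite h /= => <-.
have [lo [hi [hlo hhi hmm]]] := ex_minmax rs hne.
set c := (lo + hi) / 2.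
set d := D / 2.
have hD0 : 0 <= D := spn_ge0 rs.
have hd0 : 0 <= d by rewrite /d; apply: divr_ge0.
have hbound : forall x, x \in rs -> `|x - c| <= d.
  move=> x hx; have /andP[l1 l2] := hmm x hx.
  have := spn_ge rs _ _ hhi hlo; rewrite -/D => hD.
  have hhl : hi - lo <= D by apply: le_trans hD; apply: ler_norm.
  rewrite ler_norml /c /d; apply/andP; split; lra.
have hT := sum42 _ _ _ hbound.
rewrite sum4 sum2 hp1 hp0 in hT.
have hT' : ps 4 rs - 4 * c * ps 3 rs + 6 * c ^+ 2 * ps 2 rs + nR * c ^+ 4
     <= d ^+ 2 * (ps 2 rs + nR * c ^+ 2).
  move: hT; congr (_ <= _); ring.
have hH := core _ _ _ _ _ _ hnR (ps2_ge0 rs) hd0 hT'.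
have hE6 : E <= D ^+ 6.
  have -> : E = 432 / nR ^+ 3 * (nR * ps 2 rs * ps 4 rs - nR * ps 3 rs ^+ 2 - ps 2 rs ^+ 3).
    rewrite /E ha2 ha3 ha4 -/nR; field.
    by rewrite gt_eqF.
  have -> : D ^+ 6 = 432 / nR ^+ 3 * (4 * (nR * d ^+ 2) ^+ 3 / 27).
    rewrite /d; field; by rewrite gt_eqF.
  apply: ler_wpM2l => //.
  by apply: divr_ge0 => //; apply: exprn_ge0; apply: ltW.
have -> : D = powR (D ^+ 6) (6%:R^-1).
  rewrite -powR_mulrn // -powRrM mulfV ?powRr1 //.
  by rewrite pnatr_eq0.
apply: ge0_ler_powR; rewrite ?invr_ge0 ?ler0n ?nnegrE //.
exact: exprn_ge0.
Qed.
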